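(* Assume $B$ has full column rank, and let $R\in\mathcal R_{\rm s}^{n_y}$ be such that every eigenvalue of $A_R$ has real part at most $-\alpha_*$ for some $\alpha_*>0$. Let $M_*$ be such that $\|e^{A_Rt}\|_2\le M_*e^{-\alpha_*t}$ for all $t\ge 0$. Let $P_R$ satisfy $A_RP_R+P_RA_R^{\top}+BB^{\top}=0$, and set $E_R=(I-R)C_{\rm m,o}$, $C_{\rm r}=[0,\ C_{\rm m,o}]$. Then $$\frac{\operatorname{tr}\{C_{\rm p}P_RC_{\rm p}^{\top}\}}{\operatorname{tr}\{C_{{\rm r},R}P_RC_{{\rm r},R}^{\top}\}}\le 8\,\frac{M_*^2\,\|A_R\|_2\,\|B\|_2^2}{\sigma_{\min}^2(B)\,\alpha_*}\cdot\frac{\|C_{\rm p}\|_F^2}{\|E_R\|_F^2+\|C_{\rm r}\|_F^2}.$$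
   Context: Data: $A_{\rm p}\in\mathbb R^{n_x\times n_x}$, $B_{\rm p}\in\mathbb R^{n_x\times n_u}$, $B_w,B_{\hat w}\in\mathbb R^{n_x\times n_x}$, $C_{\rm m,o}\in\mathbb R^{n_y\times n_x}$, $C_{\rm p,o}\in\mathbb R^{n_{y_{\rm p}}\times n_x}$, $D_{\rm p,o}\in\mathbb R^{n_{y_{\rm p}}\times n_u}$, $K\in\mathbb R^{n_x\times n_y}$, $L\in\mathbb R^{n_u\times n_x}$, with $(A_{\rm p},B_{\rm p})$ controllable and $(A_{\rm p},C_{\rm m,o})$ observable. For $R\in\mathbb R^{n_y\times n_y}$: $$A_R=\begin{bmatrix}A_{\rm p}+B_{\rm p}L & -B_{\rm p}L\\ K(I-R)C_{\rm m,o} & A_{\rm p}-KC_{\rm m,o}\end{bmatrix},\quad B=\begin{bmatrix}B_w&0\\ B_w&-B_{\hat w}\end{bmatrix},$$ $C_{{\rm r},R}=[(R-I)C_{\rm m,o},\ C_{\rm m,o}]$, $C_{\rm p}=[C_{\rm p,o}+D_{\rm p,o}L,\ -D_{\rm p,o}L]$. $\mathcal R_{\rm s}^{n_y}=\{R: A_R\text{ is Hurwitz}\}$. $\|\cdot\|_2$ is the spectral norm, $\|\cdot\|_F$ the Frobenius norm, $\sigma_{\min}(B)$ the smallest singular value of $B$. *)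

(* Defs.v *)
From HB Require Import structures.
From mathcomp Require Import all_boot all_order all_algebra.
From mathcomp Require Import all_classical all_reals all_analysis.
From mathcomp Require Import complex.
Set Implicit Arguments. Unset Strict Implicit. Unset Printing Implicit Defensive.
Import Order.TTheory GRing.Theory Num.Theory.
Import numFieldNormedType.Exports.
Local Open Scope ring_scope.
Local Open Scope classical_set_scope.

Section Defs.
Variable R : realType.

Definition vnorm n (x : 'cV[R]_n) : R := Num.sqrt (\sum_i (x i 0) ^+ 2).

Definition specnorm m n (A : 'M[R]_(m, n)) : R :=
  sup [set vnorm (A *m x) | x in [set x : 'cV[R]_n | vnorm x = 1]].

Definition sigma_min m n (B : 'M[R]_(m, n)) : R :=
  inf [set vnorm (B *m x) | x in [set x : 'cV[R]_n | vnorm x = 1]].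

Definition frobnorm m n (A : 'M[R]_(m, n)) : R :=
  Num.sqrt (\sum_i \sum_j (A i j) ^+ 2).

Definition expm n (A : 'M[R]_n) (t : R) : 'M[R]_n :=
  \matrix_(i, j) limn (fun N : nat =>
     (\sum_(k < N) ((t ^+ k / (k`!)%:R) *: (A ^+ k))) i j : R).

Definition cplx_mx m n (A : 'M[R]_(m, n)) : 'M[complex R]_(m, n) :=
  map_mx (fun x => (x%:C)%C) A.

Definition is_eigenvalue n (A : 'M[R]_n) (z : complex R) : Prop :=
  eigenvalue (cplx_mx A) z.

Definition hurwitz n (A : 'M[R]_n) : Prop :=
  forall z, is_eigenvalue A z -> complex.Re z < 0.

(* Kalman controllability: the columns of [B, AB, ..., A^(n-1) B] span R^n,
   i.e. rank [B, AB, ..., A^(n-1) B] = n *)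
Definition controllable n m (A : 'M[R]_n) (B : 'M[R]_(n, m)) : Prop :=
  \rank (\sum_(k < n) <<(A ^+ k *m B)^T>>)%MS = n.

Definition observable n p (A : 'M[R]_n) (C : 'M[R]_(p, n)) : Prop :=
  controllable A^T C^T.

Definition A_R nx ny nu (Ap : 'M[R]_nx) (Bp : 'M[R]_(nx, nu)) (Cmo : 'M[R]_(ny, nx))
  (K : 'M[R]_(nx, ny)) (L : 'M[R]_(nu, nx)) (Rm : 'M[R]_ny) : 'M[R]_(nx + nx) :=
  block_mx (Ap + Bp *m L) (- (Bp *m L))
           (K *m ((1%:M - Rm) *m Cmo)) (Ap - K *m Cmo).

Definition B_cl nx (Bw Bwh : 'M[R]_nx) : 'M[R]_(nx + nx) :=
  block_mx Bw 0 Bw (- Bwh).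

Definition C_rR nx ny (Cmo : 'M[R]_(ny, nx)) (Rm : 'M[R]_ny) : 'M[R]_(ny, nx + nx) :=
  row_mx ((Rm - 1%:M) *m Cmo) Cmo.

Definition C_p nx nyp nu (Cpo : 'M[R]_(nyp, nx)) (Dpo : 'M[R]_(nyp, nu))
  (L : 'M[R]_(nu, nx)) : 'M[R]_(nyp, nx + nx) :=
  row_mx (Cpo + Dpo *m L) (- (Dpo *m L)).
End Defs.

(* Main.v *)
Require Import Defs.
From HB Require Import structures.
From mathcomp Require Import all_boot all_order all_algebra.
From mathcomp Require Import all_classical all_reals all_analysis.
From mathcomp Require Import complex.
From mathcomp Require Import ring lra.
Import Order.TTheory GRing.Theory Num.Theory.
Import numFieldNormedType.Exports.
Set Implicit Arguments. Unset Strict Implicit. Unset Printing Implicit Defensive.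
Local Open Scope ring_scope.
Section Vec.
Variable R : realType.

Definition dot n (u v : 'cV[R]_n) : R := \sum_i u i 0 * v i 0.

Lemma dot_ge0 n (u : 'cV[R]_n) : 0 <= dot u u.
Proof. by apply: sumr_ge0 => i _; rewrite -expr2 sqr_ge0. Qed.

Lemma vnorm_ge0 n (u : 'cV[R]_n) : 0 <= vnorm u.
Proof. exact: sqrtr_ge0. Qed.

Lemma vnorm2 n (u : 'cV[R]_n) : vnorm u ^+ 2 = dot u u.
Proof.
rewrite /vnorm sqr_sqrtr; last by apply: sumr_ge0 => i _; rewrite sqr_ge0.
by apply: eq_bigr => i _; rewrite expr2.
Qed.

Lemma dotC n (u v : 'cV[R]_n) : dot u v = dot v u.
Proof. by apply: eq_bigr => i _; rewrite mulrC. Qed.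

Lemma dotE n (u v : 'cV[R]_n) : dot u v = (u^T *m v) 0 0.
Proof. by rewrite mxE; apply: eq_bigr => i _; rewrite mxE. Qed.

Lemma cs_sum n (a b : 'I_n -> R) :
  (\sum_i a i * b i) ^+ 2 <= (\sum_i a i ^+ 2) * (\sum_i b i ^+ 2).
Proof.
have E1 : (\sum_i a i * b i) ^+ 2 = \sum_i \sum_j (a i * b i) * (a j * b j).
  by rewrite expr2 mulr_suml; apply: eq_bigr => i _; rewrite mulr_sumr.
have E2 : (\sum_i a i ^+ 2) * (\sum_i b i ^+ 2) = \sum_i \sum_j (a i ^+ 2 * b j ^+ 2).
  by rewrite mulr_suml; apply: eq_bigr => i _; rewrite mulr_sumr.
have E3 : (\sum_i a i ^+ 2) * (\sum_i b i ^+ 2) = \sum_i \sum_j (a j ^+ 2 * b i ^+ 2).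
  by rewrite E2 exchange_big.
rewrite -(@ler_pM2l _ 2) // [X in _ <= X]mulr_natl [X in _ <= X]mulr2n {1}E2 E3 -big_split /= E1 mulr_sumr.
apply: ler_sum => i _; rewrite mulr_sumr -big_split /=; apply: ler_sum => j _.
rewrite -subr_ge0.
have -> : a i ^+ 2 * b j ^+ 2 + a j ^+ 2 * b i ^+ 2 - 2 * (a i * b i * (a j * b j))
   = (a i * b j - a j * b i) ^+ 2 by ring.
exact: sqr_ge0.
Qed.


Lemma sqr_le (x y : R) : 0 <= x -> 0 <= y -> x ^+ 2 <= y ^+ 2 -> x <= y.
Proof. by move=> x0 y0; rewrite (ler_pXn2r (n:=2)). Qed.

Lemma cs_dot n (u v : 'cV[R]_n) : dot u v <= vnorm u * vnorm v.
Proof.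
have [le0|gt0] := lerP (dot u v) 0.
  by apply: (le_trans le0); rewrite mulr_ge0 // vnorm_ge0.
apply: sqr_le; [exact: ltW|by rewrite mulr_ge0 // vnorm_ge0|].
rewrite exprMn !vnorm2 /dot.
have E : forall w : 'cV[R]_n, \sum_i w i 0 * w i 0 = \sum_i w i 0 ^+ 2.
  by move=> w; apply: eq_bigr => i _; rewrite expr2.
rewrite !E; exact: (cs_sum (fun i => u i 0) (fun i => v i 0)).
Qed.

Lemma vnorm_eq0 n (u : 'cV[R]_n) : vnorm u = 0 -> u = 0.
Proof.
move=> h; have : dot u u = 0 by rewrite -vnorm2 h expr2 mulr0.
move/psumr_eq0P => H; apply/matrixP => i j; rewrite (ord1 j) mxE.
have := H (fun k _ => ltac:(rewrite -expr2; exact: sqr_ge0)) i isT.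
by rewrite -expr2 => /eqP; rewrite sqrf_eq0 => /eqP.
Qed.

Lemma vnormZ n c (u : 'cV[R]_n) : vnorm (c *: u) = `|c| * vnorm u.
Proof.
rewrite /vnorm -sqrtr_sqr -sqrtrM ?sqr_ge0 //; congr Num.sqrt.
by rewrite mulr_sumr; apply: eq_bigr => i _; rewrite mxE exprMn.
Qed.

Lemma vnorm0 n : vnorm (0 : 'cV[R]_n) = 0.
Proof. by rewrite -(scale0r 0) vnormZ normr0 mul0r. Qed.

Lemma frob2 m n (M : 'M[R]_(m, n)) : frobnorm M ^+ 2 = \sum_i \sum_j M i j ^+ 2.
Proof.
by rewrite /frobnorm sqr_sqrtr // sumr_ge0 // => i _; rewrite sumr_ge0 // => j _; rewrite sqr_ge0.
Qed.

Lemma frob_ge0 m n (M : 'M[R]_(m, n)) : 0 <= frobnorm M.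
Proof. exact: sqrtr_ge0. Qed.

Lemma frob_bound m n (M : 'M[R]_(m, n)) x : vnorm (M *m x) <= frobnorm M * vnorm x.
Proof.
apply: sqr_le; [exact: vnorm_ge0| by rewrite mulr_ge0 ?frob_ge0 ?vnorm_ge0|].
rewrite exprMn frob2 !vnorm2 /dot mulr_suml; apply: ler_sum => i _.
rewrite mxE -expr2.
have -> : \sum_j x j 0 * x j 0 = \sum_j x j 0 ^+ 2.
  by apply: eq_bigr => j _; rewrite expr2.
exact: (cs_sum (fun j => M i j) (fun j => x j 0)).
Qed.

End Vec.


Section Spec.
Variable R : realType.

Lemma exists_unit n : (0 < n)%N -> exists u : 'cV[R]_n, vnorm u = 1.
Proof.
move=> n0; set x : 'cV[R]_n := const_mx 1.
have xn0 : vnorm x != 0.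
  apply/eqP => /vnorm_eq0 /matrixP /(_ (Ordinal n0) 0); rewrite !mxE => /eqP.
  by rewrite oner_eq0.
exists ((vnorm x)^-1 *: x); rewrite vnormZ normfV ger0_norm ?vnorm_ge0 //.
by rewrite mulVf.
Qed.

Lemma spec_bound m n (M : 'M[R]_(m, n)) x :
  vnorm (M *m x) <= specnorm M * vnorm x.
Proof.
have [/vnorm_eq0 ->|xn0] := eqVneq (vnorm x) 0.
  by rewrite mulmx0 !vnorm0 mulr0.
have xp : 0 < vnorm x by rewrite lt_neqAle eq_sym xn0 vnorm_ge0.
set u := (vnorm x)^-1 *: x.
have u1 : vnorm u = 1 by rewrite /u vnormZ normfV ger0_norm ?vnorm_ge0 // mulVf.
have hub : has_ubound [set vnorm (M *m x) | x in [set x : 'cV[R]_n | vnorm x = 1]].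
  exists (frobnorm M) => /= _ [y /= y1 <-].
  by have := frob_bound M y; rewrite y1 mulr1.
have Mx : M *m x = vnorm x *: (M *m u).
  by rewrite /u -scalemxAr scalerA mulfV // scale1r.
clearbody u; rewrite Mx vnormZ ger0_norm ?vnorm_ge0 // mulrC ler_pM2r //.
by apply: (ub_le_sup hub); exists u.
Qed.

Lemma specnorm_ge0 m n (M : 'M[R]_(m, n)) : 0 <= specnorm M.
Proof.
have [n0|] := posnP n.
  rewrite /specnorm.
  set S := (X in sup X).
  suff -> : S = set0 by rewrite sup0.
  apply/seteqP; split => // _ [y /= y1 _]; exfalso.
  move: y1; have -> : y = 0 by apply/matrixP => -[i hi]; exfalso; move: hi; rewrite n0.
  by rewrite vnorm0 => /esym/eqP; rewrite oner_eq0.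
move=> /exists_unit [u u1].
by have := spec_bound M u; rewrite u1 mulr1; apply: le_trans; exact: vnorm_ge0.
Qed.

Lemma dot_trmx m n (M : 'M[R]_(m, n)) x y : dot (M^T *m x) y = dot x (M *m y).
Proof. by rewrite !dotE trmx_mul trmxK mulmxA. Qed.

Lemma specT m n (M : 'M[R]_(m, n)) x :
  vnorm (M^T *m x) <= specnorm M * vnorm x.
Proof.
set w := M^T *m x.
have [w0|wn0] := eqVneq (vnorm w) 0.
  by rewrite w0 mulr_ge0 ?specnorm_ge0 ?vnorm_ge0.
have wp : 0 < vnorm w by rewrite lt_neqAle eq_sym wn0 vnorm_ge0.
have : vnorm w ^+ 2 <= specnorm M * vnorm x * vnorm w.
  rewrite vnorm2.
  have -> : dot w w = dot x (M *m w).
    by rewrite {1}/w dot_trmx.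
  apply: le_trans (cs_dot _ _) _.
  rewrite (mulrC (specnorm M)) -mulrA ler_wpM2l ?vnorm_ge0 //.
  exact: spec_bound.
by rewrite expr2 ler_pM2r.
Qed.

Lemma sig_bound m n (B : 'M[R]_(m, n)) v :
  sigma_min B * vnorm v <= vnorm (B *m v).
Proof.
have [/vnorm_eq0 ->|vn0] := eqVneq (vnorm v) 0.
  by rewrite mulmx0 !vnorm0 mulr0.
have vp : 0 < vnorm v by rewrite lt_neqAle eq_sym vn0 vnorm_ge0.
set u := (vnorm v)^-1 *: v.
have u1 : vnorm u = 1 by rewrite /u vnormZ normfV ger0_norm ?vnorm_ge0 // mulVf.
have hlb : has_lbound [set vnorm (B *m x) | x in [set x : 'cV[R]_n | vnorm x = 1]].
  by exists 0 => /= _ [y /= y1 <-]; exact: vnorm_ge0.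
have Bv : B *m v = vnorm v *: (B *m u).
  by rewrite /u -scalemxAr scalerA mulfV // scale1r.
clearbody u; rewrite Bv vnormZ ger0_norm ?vnorm_ge0 // mulrC ler_pM2l //.
by apply: (ge_inf hlb); exists u.
Qed.

Lemma sig_pos n (B : 'M[R]_n) : B \in unitmx -> (0 < n)%N -> 0 < sigma_min B.
Proof.
move=> Bu n0; set f := frobnorm (invmx B).
have key : forall v : 'cV[R]_n, vnorm v = 1 -> 1 <= f * vnorm (B *m v).
  move=> v v1; rewrite -v1.
  have {1}-> : v = invmx B *m (B *m v) by rewrite mulmxA mulVmx // mul1mx.
  exact: frob_bound.
have [u u1] := exists_unit n0.
have fp : 0 < f.
  have := key u u1; rewrite lt_neqAle frob_ge0 andbT; apply: contraTneq => <-.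
  by rewrite mul0r ler10.
apply: lt_le_trans (_ : f^-1 <= _); first by rewrite invr_gt0.
apply: lb_le_inf; first by exists (vnorm (B *m u)); exists u.
move=> /= _ [y /= y1 <-].
have h := key y y1.
have -> : vnorm (B *m y) = f^-1 * (f * vnorm (B *m y)) by rewrite mulKf // gt_eqF.
by rewrite -{1}(mulr1 f^-1) ler_wpM2l // invr_ge0 ltW.
Qed.

Lemma sigT n (B : 'M[R]_n) x : B \in unitmx -> 0 <= sigma_min B ->
  sigma_min B * vnorm x <= vnorm (B^T *m x).
Proof.
move=> Bu s0; set s := sigma_min B.
have [x0|xn0] := eqVneq (vnorm x) 0; first by rewrite x0 mulr0 vnorm_ge0.
have xp : 0 < vnorm x by rewrite lt_neqAle eq_sym xn0 vnorm_ge0.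
set z := invmx B *m x.
have h1 : vnorm x ^+ 2 <= vnorm (B^T *m x) * vnorm z.
  rewrite vnorm2.
  have -> : dot x x = dot (B^T *m x) z.
    by rewrite dot_trmx /z mulmxA mulmxV // mul1mx.
  exact: cs_dot.
have h2 : s * vnorm z <= vnorm x.
  by have := sig_bound B z; rewrite /z mulmxA mulmxV // mul1mx.
have : s * vnorm x ^+ 2 <= vnorm (B^T *m x) * vnorm x.
  apply: le_trans (ler_wpM2l s0 h1) _.
  by rewrite mulrCA ler_wpM2l ?vnorm_ge0.
by rewrite expr2 mulrA ler_pM2r.
Qed.

End Spec.


Local Open Scope classical_set_scope.
Section Expm.
Variable R : realType.
Variable n : nat.
Variable G : 'M[R]_n.

Definition cf (m : nat) (i j : 'I_n) (k : nat) : R := (G ^+ (k + m)) i j / k`!%:R.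
Definition sG : R := \sum_i \sum_j `|G i j|.

Lemma sG_ge0 : 0 <= sG.
Proof. by apply: sumr_ge0 => i _; apply: sumr_ge0 => j _. Qed.

Lemma powG_bound k i j : `|(G ^+ k) i j| <= sG ^+ k.
Proof.
elim: k i j => [|k IH] i j.
  rewrite expr0 !mxE; case: (i == j); rewrite ?normr1 ?normr0 //.
rewrite exprS -mulmxE mxE exprS.
apply: le_trans (ler_norm_sum _ _ _) _.
apply: le_trans (_ : \sum_l `|G i l| * sG ^+ k <= _).
  by apply: ler_sum => l _; rewrite normrM ler_wpM2l.
rewrite -mulr_suml ler_wpM2r ?exprn_ge0 ?sG_ge0 //.
rewrite /sG [X in _ <= X](bigD1 i) //= lerDl.
by apply: sumr_ge0 => i' _; apply: sumr_ge0 => j' _.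
Qed.

Lemma cf_cvg m i j K : cvgn (pseries (cf m i j) K).
Proof.
apply: normed_cvg; rewrite /normed_series_of /=.
apply: (@series_le_cvg _ _ ((sG ^+ m) *: exp_coeff (sG * `|K|))).
- by move=> k.
- move=> k; rewrite /exp_coeff /= mulr_ge0 ?exprn_ge0 ?sG_ge0 //.
  by rewrite divr_ge0 // exprn_ge0 // mulr_ge0 ?sG_ge0.
- move=> k; rewrite /exp_coeff /= /cf normrM normrX normrM normfV.
  rewrite [`|k`!%:R|]ger0_norm //.
  rewrite (_ : (sG ^+ m *: _) k = sG ^+ m * ((sG * `|K|) ^+ k / k`!%:R)) //.
  rewrite (_ : sG ^+ m * ((sG * `|K|) ^+ k / k`!%:R) = sG ^+ (k + m) / k`!%:R * `|K| ^+ k);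
    last by rewrite exprMn exprD; ring.
  by rewrite ler_wpM2r ?exprn_ge0 // ler_wpM2r ?invr_ge0 // powG_bound.
- apply: is_cvg_seriesZ; exact: is_cvg_series_exp_coeff.
Qed.

Lemma expm_entry t i j : expm G t i j = limn (pseries (cf 0 i j) t).
Proof.
rewrite mxE.
suff -> : (fun N : nat => (\sum_(k < N) ((t ^+ k / (k`!)%:R) *: (G ^+ k))) i j) =
   pseries (cf 0 i j) t by [].
apply/funext => N; rewrite summxE /pseries /series /= big_mkord; apply: eq_bigr => k _.
by rewrite mxE /cf addn0; ring.
Qed.

Lemma cf_diffs m i j : pseries_diffs (cf m i j) = cf m.+1 i j.
Proof.
apply/funext => k; rewrite /pseries_diffs /cf addSnnS factS natrM invfM.
by rewrite mulrCA mulVKf // pnatr_eq0.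
Qed.

Lemma cf_succ m i j k : cf m.+1 i j k = \sum_l G i l * cf m l j k.
Proof.
rewrite /cf addnS exprS -mulmxE mxE mulr_suml; apply: eq_bigr => l _.
by rewrite mulrA.
Qed.

Lemma pseries_succ m i j t :
  pseries (cf m.+1 i j) t = fun N => \sum_l G i l * pseries (cf m l j) t N.
Proof.
apply/funext => N; rewrite /pseries /series /=.
under eq_bigr do rewrite cf_succ mulr_suml.
rewrite exchange_big /=; apply: eq_bigr => l _; rewrite mulr_sumr.
by apply: eq_bigr => k _; rewrite mulrA.
Qed.

Lemma lim_fsum (a : 'I_n -> R) (F : 'I_n -> nat -> R) :
  (forall l, cvgn (F l)) ->
  (fun N => \sum_l a l * F l N) @ \oo --> \sum_l a l * limn (F l).
Proof.
move=> cF.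
have -> : (fun N => \sum_l a l * F l N) = \sum_l (fun N => a l * F l N).
  by rewrite fct_sumE.
elim/big_ind2 : _ => [|f1 x1 f2 x2 h1 h2|l _].
- exact: cvg_cst.
- exact: cvgD.
- exact: cvgMl_tmp.
Qed.

Lemma expm_entry_derive (t : R) i j :
  is_derive t (1 : R) (fun s => expm G s i j) (\sum_l G i l * expm G t l j).
Proof.
have -> : (fun s => expm G s i j) = (fun s => limn (pseries (cf 0 i j) s)).
  by apply/funext => s; rewrite expm_entry.
have H := @pseries_snd_diffs R (cf 0 i j) (`|t| + 1) t (@cf_cvg 0 i j _).
rewrite !cf_diffs in H.
have := H (@cf_cvg 1 i j _) (@cf_cvg 2 i j _).
rewrite [`|_ + 1|]ger0_norm ?addr_ge0 // ltrDl ltr01 => /(_ isT) D.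
apply: is_derive_eq D _.
rewrite pseries_succ.
under [X in _ = X]eq_bigr do rewrite expm_entry.
apply: cvg_lim => //; apply: lim_fsum => l; exact: cf_cvg.
Qed.

Lemma expm_vec_derive (t : R) (x : 'cV[R]_n) i :
  is_derive t (1 : R) (fun s => (expm G s *m x) i 0) ((G *m (expm G t *m x)) i 0).
Proof.
have -> : (fun s => (expm G s *m x) i 0) = \sum_j (x j 0 \*: (fun s => expm G s i j)).
  rewrite fct_sumE; apply/funext => s; rewrite mxE; apply: eq_bigr => j _.
  by rewrite /= mulrC.
rewrite mulmxA mxE.
have -> : \sum_j (G *m expm G t) i j * x j 0 = \sum_j x j 0 *: \sum_l G i l * expm G t l j.
  by apply: eq_bigr => j _; rewrite mxE mulrC.
apply: is_derive_sum => j; apply: is_deriveZ; exact: expm_entry_derive.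
Qed.

End Expm.

Local Open Scope classical_set_scope.

Section P4.
Variable R : realType.

Lemma trX n (A : 'M[R]_n) k : (A^T) ^+ k = (A ^+ k)^T.
Proof.
elim: k => [|k IH]; first by rewrite !expr0 trmx1.
by rewrite exprS IH exprSr -!mulmxE trmx_mul.
Qed.

Lemma expm_tr n (A : 'M[R]_n) t : expm A^T t = (expm A t)^T.
Proof.
apply/matrixP => i j; rewrite !mxE.
suff -> : (fun N : nat => (\sum_(k < N) ((t ^+ k / (k`!)%:R) *: (A^T ^+ k))) i j) =
  (fun N : nat => (\sum_(k < N) ((t ^+ k / (k`!)%:R) *: (A ^+ k))) j i) by [].
apply/funext => N; rewrite !summxE; apply: eq_bigr => k _.
by rewrite !mxE trX mxE.
Qed.

Lemma qfE n (u v : 'cV[R]_n) (Q : 'M[R]_n) :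
  (u^T *m Q *m v) 0 0 = \sum_i \sum_j u i 0 * Q i j * v j 0.
Proof.
rewrite mxE; under eq_bigr do rewrite mxE mulr_suml.
rewrite exchange_big; apply: eq_bigr => i _; apply: eq_bigr => j _.
by rewrite !mxE.
Qed.

Lemma qf_derive n (Q : 'M[R]_n) (y : R -> 'cV[R]_n) (dy : 'cV[R]_n) (t : R) :
  (forall i, is_derive t (1 : R) (fun s => y s i 0) (dy i 0)) ->
  is_derive t (1 : R) (fun s => ((y s)^T *m Q *m y s) 0 0)
    ((dy^T *m Q *m y t) 0 0 + ((y t)^T *m Q *m dy) 0 0).
Proof.
move=> Hd.
have -> : (fun s => ((y s)^T *m Q *m y s) 0 0) =
   \sum_i \sum_j ((Q i j \*: (fun s => y s i 0)) * (fun s => y s j 0)).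
  apply/funext => s; rewrite qfE !fct_sumE; apply: eq_bigr => i _.
  rewrite !fct_sumE; apply: eq_bigr => j _.
  by transitivity (Q i j * y s i 0 * y s j 0); [ring|].
rewrite !qfE -big_split /=.
apply: is_derive_sum => i; rewrite -big_split /=.
apply: is_derive_sum => j.
have h := is_deriveM (is_deriveZ (Q i j) (Hd i)) (Hd j).
apply: is_derive_eq h _.
by transitivity ((Q i j * y t i 0) * dy j 0 + y t j 0 * (Q i j * dy i 0)); [|ring].
Qed.

Lemma mono_le (f df : R -> R) T : 0 <= T ->
  (forall t, is_derive t (1 : R) f (df t)) -> (forall t, 0 <= t -> 0 <= df t) -> f 0 <= f T.
Proof.
rewrite le_eqVlt => /orP [/eqP <- //| T0] Hd Hp.
have [c c0T E] := MVT T0 (fun x _ => Hd x) (derivable_within_continuous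
   (fun x _ => ltac:(by have [] := Hd x))).
rewrite -subr_ge0 E subr0 mulr_ge0 ?(ltW T0) //.
apply: Hp; move: c0T; rewrite in_itv /= => /andP [/ltW] //.
Qed.

Lemma decay_le (d K a : R) : 0 < a ->
  (forall T, 0 <= T -> d <= K * expR (- a * T)) -> d <= 0.
Proof.
move=> a0 H; rewrite leNgt; apply/negP => d0.
have Kd : d <= K by have := H 0 (lexx _); rewrite mulr0 expR0 mulr1.
have K0 : 0 < K by apply: lt_le_trans Kd.
set T := K / (a * d).
have T0 : 0 <= T by rewrite /T divr_ge0 // ?ltW // mulr_gt0.
have := H T T0.
have e1 : 1 + a * T <= expR (a * T) by exact: expR_ge1Dx.
have aT : a * T = K / d by rewrite /T mulrCA invfM mulVKf // lt0r_neq0.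
rewrite mulNr expRN; apply/negP; rewrite -ltNge.
rewrite ltr_pdivrMr ?expR_gt0 //.
apply: lt_le_trans (_ : d * (1 + a * T) <= _); last by rewrite ler_wpM2l // ltW.
by rewrite aT mulrDr mulr1 mulrCA mulfV ?gt_eqF // mulr1 ltrDr.
Qed.

End P4.

Local Open Scope classical_set_scope.

Section P5.
Variable R : realType.

Lemma expm0 n (G : 'M[R]_n) : expm G 0 = 1%:M.
Proof.
apply/matrixP => i j; rewrite mxE.
apply: cvg_lim => //; apply: cvg_near_cst; exists 1%N => // N /= hN.
case: N hN => // N _; rewrite big_ord_recl /= expr0 mul1r fact0 invr1 expr0 big1.
  by rewrite addr0 scale1r.
by move=> k _; rewrite expr0n /= mul0r scale0r.
Qed.

Lemma dotN n (u v : 'cV[R]_n) : dot (- u) v = - dot u v.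
Proof. by rewrite /dot -sumrN; apply: eq_bigr => i _; rewrite mxE mulNr. Qed.

Lemma vnormN n (u : 'cV[R]_n) : vnorm (- u) = vnorm u.
Proof. by rewrite -scaleN1r vnormZ normrN1 mul1r. Qed.

Lemma cs_dot_low n (u v : 'cV[R]_n) : - (vnorm u * vnorm v) <= dot u v.
Proof. by rewrite lerNl -dotN -(vnormN u) cs_dot. Qed.

Lemma qf_dot n (Q : 'M[R]_n) z : (z^T *m Q *m z) 0 0 = dot z (Q *m z).
Proof. by rewrite dotE mulmxA. Qed.

Lemma qf_aux n (Q : 'M[R]_n) z : vnorm z * vnorm (Q *m z) <= frobnorm Q * vnorm z ^+ 2.
Proof.
rewrite [frobnorm Q * _]mulrC expr2 -mulrA ler_wpM2l ?vnorm_ge0 // mulrC.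
exact: frob_bound.
Qed.

Lemma qf_le n (Q : 'M[R]_n) z : `|(z^T *m Q *m z) 0 0| <= frobnorm Q * vnorm z ^+ 2.
Proof.
rewrite qf_dot ler_norml; apply/andP; split.
  by rewrite lerNl; apply: le_trans (qf_aux Q z); rewrite -lerNl cs_dot_low.
exact: le_trans (cs_dot _ _) (qf_aux Q z).
Qed.

Lemma lyap_deriv n (A P B : 'M[R]_n) z :
  A *m P + P *m A^T + B *m B^T = 0 ->
  ((A^T *m z)^T *m P *m z) 0 0 + (z^T *m P *m (A^T *m z)) 0 0 =
  - vnorm (B^T *m z) ^+ 2.
Proof.
move=> HL.
have HL' : A *m P + P *m A^T = - (B *m B^T) by apply/eqP; rewrite -addr_eq0 HL.
have E1 : forall M1 M2 : 'M[R]_1, M1 0 0 + M2 0 0 = (M1 + M2) 0 0 by move=> ? ?; rewrite mxE.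
have E2 : forall M1 : 'M[R]_1, - M1 0 0 = (- M1) 0 0 by move=> ?; rewrite mxE.
rewrite vnorm2 dotE E1 E2; congr (fun_of_matrix _ 0 0).
rewrite !trmx_mul !trmxK.
transitivity (z^T *m (A *m P + P *m A^T) *m z); first by rewrite mulmxDr mulmxDl !mulmxA.
by rewrite HL' mulmxN mulNmx !mulmxA.
Qed.

End P5.

Local Open Scope classical_set_scope.

Section P6.
Variable R : realType.
Variable n : nat.
Variables A P B : 'M[R]_n.
Variables M al : R.
Hypothesis HL : A *m P + P *m A^T + B *m B^T = 0.
Hypothesis Hal : 0 < al.
Hypothesis Hdec : forall t z, 0 <= t ->
  vnorm (expm A^T t *m z) <= M * expR (- al * t) * vnorm z.
Variable x : 'cV[R]_n.

Let y s := expm A^T s *m x.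

Lemma y0 : y 0 = x.
Proof. by rewrite /y expm0 mul1mx. Qed.

Lemma dy s i : is_derive s (1 : R) (fun s => y s i 0) ((A^T *m y s) i 0).
Proof. exact: expm_vec_derive. Qed.

Lemma expR2 s : expR (- (2 * al) * s) = expR (- al * s) ^+ 2.
Proof. by rewrite -expRM_natl; congr expR; ring. Qed.

Lemma hy2 s : 0 <= s -> vnorm (y s) ^+ 2 <= M ^+ 2 * vnorm x ^+ 2 * expR (- (2 * al) * s).
Proof.
move=> s0; have h := Hdec x s0.
have h0 : 0 <= vnorm (y s) := vnorm_ge0 _.
apply: le_trans (_ : (M * expR (- al * s) * vnorm x) ^+ 2 <= _).
  by rewrite !expr2 ler_pM.
by rewrite expR2 le_eqVlt; apply/orP; left; apply/eqP; ring.
Qed.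

Lemma dexp s : is_derive s (1 : R) (fun s => expR (- (2 * al) * s))
   (expR (- (2 * al) * s) * (- (2 * al))).
Proof.
have h1 : is_derive s (1 : R) (fun s => - (2 * al) * s) (- (2 * al)).
  have h := is_deriveZ (- (2 * al)) (is_derive_id s (1 : R)).
  have -> : (fun s => - (2 * al) * s) = (- (2 * al)) \*: id by apply/funext.
  by apply: is_derive_eq h _; rewrite /GRing.scale /= mulr1.
have := is_derive1_comp (is_derive_expR _) h1.
by [].
Qed.


Let f s := ((y s)^T *m P *m y s) 0 0.

Lemma df s : is_derive s (1 : R) f (- vnorm (B^T *m y s) ^+ 2).
Proof.
rewrite -(lyap_deriv (y s) HL); apply: qf_derive => i; exact: dy.
Qed.

Lemma fT T : 0 <= T -> `|f T| <= frobnorm P * (M ^+ 2 * vnorm x ^+ 2) * expR (- (2 * al) * T).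
Proof.
move=> T0; apply: le_trans (qf_le _ _) _.
by rewrite -mulrA ler_wpM2l ?frob_ge0 // hy2.
Qed.

Lemma P_upper : (x^T *m P *m x) 0 0 <= specnorm B ^+ 2 * M ^+ 2 / (2 * al) * vnorm x ^+ 2.
Proof.
set c := specnorm B ^+ 2 * M ^+ 2 / (2 * al) * vnorm x ^+ 2.
have c0 : 0 <= c.
  rewrite /c; apply: mulr_ge0; last exact: sqr_ge0.
  apply: divr_ge0; first by rewrite mulr_ge0 ?sqr_ge0.
  by rewrite mulr_ge0 // ltW.
pose g s := f s - c * expR (- (2 * al) * s).
pose dg s := - vnorm (B^T *m y s) ^+ 2 - c * (expR (- (2 * al) * s) * (- (2 * al))).
have Hg : forall s, is_derive s (1 : R) g (dg s).
  move=> s; apply: is_deriveB; first exact: df.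
  apply: (@is_deriveZ _ _ _ (fun s => expR (- (2 * al) * s))); exact: dexp.
have Hpos : forall s, 0 <= s -> 0 <= dg s.
  move=> s s0; rewrite /dg !mulrN opprK addrC subr_ge0.
  have e1 : c * (expR (- (2 * al) * s) * (2 * al)) =
      specnorm B ^+ 2 * (M ^+ 2 * vnorm x ^+ 2 * expR (- (2 * al) * s)).
    by rewrite /c; field; rewrite gt_eqF ?mulr_gt0.
  rewrite e1; apply: le_trans (_ : (specnorm B * vnorm (y s)) ^+ 2 <= _).
    rewrite !expr2 ler_pM ?vnorm_ge0 //; exact: specT.
  by rewrite exprMn ler_wpM2l ?sqr_ge0 // hy2.
have key : forall T, 0 <= T -> g 0 <= g T.
  move=> T T0; exact: (mono_le T0 Hg Hpos).
have : (x^T *m P *m x) 0 0 - c <= 0.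
  apply: (@decay_le _ _ (frobnorm P * (M ^+ 2 * vnorm x ^+ 2)) (2 * al)); first by rewrite mulr_gt0.
  move=> T T0; have := key T T0.
  rewrite /g /f y0 mulr0 expR0 mulr1 => h; apply: (le_trans h).
  rewrite mulNr; apply: le_trans (_ : f T <= _); first by rewrite gerDl oppr_le0 mulr_ge0 ?expR_ge0.
  have := fT T0; rewrite mulNr => hf; exact: le_trans (ler_norm _) hf.
by move=> hh; rewrite -subr_le0.
Qed.

Lemma P_lower a' s' : specnorm A < a' -> 0 <= s' ->
  (forall z, s' * vnorm z <= vnorm (B^T *m z)) ->
  s' ^+ 2 / (2 * a') * vnorm x ^+ 2 <= (x^T *m P *m x) 0 0.
Proof.
move=> Ha Hs Hsig.
have a0 : 0 <= specnorm A := specnorm_ge0 A.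
have a'0 : 0 < a' by apply: le_lt_trans Ha.
set c := s' ^+ 2 / (2 * a').
have c0 : 0 <= c.
  by rewrite /c; apply: divr_ge0; [exact: sqr_ge0 | rewrite mulr_ge0 // ltW].
pose u : R -> R := fun s => ((y s)^T *m 1%:M *m y s) 0 0.
have du : forall s, is_derive s (1 : R) u (2 * dot (y s) (A *m y s)).
  move=> s; apply: is_derive_eq; first by apply: qf_derive => i; exact: dy.
  rewrite !mulmx1 -!dotE [dot (y s) _]dotC !dot_trmx mulr2n mulrDl mul1r.
  by [].
pose h s := c * u s - f s.
pose dh s := c * (2 * dot (y s) (A *m y s)) - - vnorm (B^T *m y s) ^+ 2.
have Hh : forall s, is_derive s (1 : R) h (dh s).
  move=> s; apply: is_deriveB; last exact: df.
have Hpos : forall s, 0 <= s -> 0 <= dh s.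
  move=> s s0; rewrite /dh opprK.
  set Y := vnorm (y s) ^+ 2.
  have Y0 : 0 <= Y by rewrite sqr_ge0.
  have h1 : - (specnorm A * Y) <= dot (y s) (A *m y s).
    apply: le_trans (cs_dot_low _ _); rewrite lerN2 /Y expr2 mulrCA ler_wpM2l ?vnorm_ge0 //.
    exact: spec_bound.
  have h2 : s' ^+ 2 * Y <= vnorm (B^T *m y s) ^+ 2.
    by rewrite /Y -exprMn !expr2 ler_pM ?mulr_ge0 ?vnorm_ge0.
  have h3 : 2 * specnorm A * c <= s' ^+ 2.
    have -> : 2 * specnorm A * c = s' ^+ 2 * (specnorm A / a').
      by rewrite /c; field; rewrite lt0r_neq0.
    rewrite -{2}(mulr1 (s' ^+ 2)) ler_wpM2l ?sqr_ge0 //.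
    by rewrite ler_pdivrMr // mul1r ltW.
  nra.
have key : forall T, 0 <= T -> h 0 <= h T.
  move=> T T0; exact: (mono_le T0 Hh Hpos).
have : c * vnorm x ^+ 2 - (x^T *m P *m x) 0 0 <= 0.
  apply: (@decay_le _ _ ((c + frobnorm P) * (M ^+ 2 * vnorm x ^+ 2)) (2 * al)); first by rewrite mulr_gt0.
  move=> T T0; have := key T T0.
  rewrite /h /u /f y0 mulmx1 -dotE -vnorm2 => hh; apply: (le_trans hh).
  rewrite mulrDl mulrDl; apply: lerD.
    rewrite mulmx1 -dotE -vnorm2; apply: le_trans (ler_wpM2l c0 (hy2 T0)) _; rewrite mulrA; exact: lexx.
  rewrite lerNl; apply: le_trans (_ : - `|f T| <= _); last by rewrite lerNl ler_normr lexx orbT.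
  rewrite lerN2; apply: le_trans (fT T0) _; rewrite !mulrA; exact: lexx.
by move=> hh2; rewrite -subr_le0.
Qed.

End P6.

Local Open Scope classical_set_scope.

Section P7.
Variable R : realType.

Lemma tr_sum m n (P : 'M[R]_n) (C : 'M[R]_(m, n)) :
  \tr (C *m P *m C^T) = \sum_i ((((row i C)^T)^T *m P *m (row i C)^T) 0 0).
Proof.
rewrite /mxtrace; apply: eq_bigr => i _; rewrite trmxK !mxE.
apply: eq_bigr => k _; rewrite !mxE; congr (_ * _).
by apply: eq_bigr => l _; rewrite !mxE.
Qed.

Lemma frob_rows m n (C : 'M[R]_(m, n)) :
  frobnorm C ^+ 2 = \sum_i vnorm ((row i C)^T) ^+ 2.
Proof.
rewrite frob2; apply: eq_bigr => i _; rewrite vnorm2; apply: eq_bigr => j _.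
by rewrite !mxE expr2.
Qed.

Lemma trace_ub m n (P : 'M[R]_n) (C : 'M[R]_(m, n)) c :
  (forall z, (z^T *m P *m z) 0 0 <= c * vnorm z ^+ 2) ->
  \tr (C *m P *m C^T) <= c * frobnorm C ^+ 2.
Proof.
move=> H; rewrite tr_sum frob_rows mulr_sumr; apply: ler_sum => i _; exact: H.
Qed.

Lemma trace_lb m n (P : 'M[R]_n) (C : 'M[R]_(m, n)) c :
  (forall z, c * vnorm z ^+ 2 <= (z^T *m P *m z) 0 0) ->
  c * frobnorm C ^+ 2 <= \tr (C *m P *m C^T).
Proof.
move=> H; rewrite tr_sum frob_rows mulr_sumr; apply: ler_sum => i _; exact: H.
Qed.

Lemma tr_n0 m n (P : 'M[R]_n) (C : 'M[R]_(m, n)) : n = 0%N -> \tr (C *m P *m C^T) = 0.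
Proof.
move=> n0; rewrite tr_sum big1 // => i _; rewrite qfE big1 // => k _.
by exfalso; case: k => k hk; move: hk; rewrite n0.
Qed.

Lemma frob_rowmx m n1 n2 (C1 : 'M[R]_(m, n1)) (C2 : 'M[R]_(m, n2)) :
  frobnorm (row_mx C1 C2) ^+ 2 = frobnorm C1 ^+ 2 + frobnorm C2 ^+ 2.
Proof.
rewrite !frob2 -big_split /=; apply: eq_bigr => i _.
by rewrite big_split_ord /=; congr (_ + _); apply: eq_bigr => j _; rewrite ?row_mxEl ?row_mxEr.
Qed.

Lemma frobN m n (C : 'M[R]_(m, n)) : frobnorm (- C) = frobnorm C.
Proof.
by rewrite /frobnorm; congr Num.sqrt; apply: eq_bigr => i _; apply: eq_bigr => j _; rewrite mxE sqrrN.
Qed.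

Lemma frob0 m n : frobnorm (0 : 'M[R]_(m, n)) = 0.
Proof.
by rewrite /frobnorm big1 ?sqrtr0 // => i _; rewrite big1 // => j _; rewrite mxE expr0n.
Qed.

End P7.


Local Close Scope classical_set_scope.
Unset Implicit Arguments.
Local Open Scope ring_scope.

Theorem theorem2 (R : realType) (nx nu ny nyp : nat)
  (Ap : 'M[R]_nx) (Bp : 'M[R]_(nx, nu)) (Bw Bwh : 'M[R]_nx)
  (Cmo : 'M[R]_(ny, nx)) (Cpo : 'M[R]_(nyp, nx)) (Dpo : 'M[R]_(nyp, nu))
  (K : 'M[R]_(nx, ny)) (L : 'M[R]_(nu, nx))
  (Hctrb : controllable Ap Bp) (Hobsv : observable Ap Cmo)
  (HB : \rank (B_cl Bw Bwh) = (nx + nx)%N)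
  (Rm : 'M[R]_ny) (HRs : hurwitz (A_R Ap Bp Cmo K L Rm))
  (alpha : R) (Halpha : 0 < alpha)
  (Heig : forall z : R[i], is_eigenvalue (A_R Ap Bp Cmo K L Rm) z ->
            complex.Re z <= - alpha)
  (Mst : R)
  (HM : forall t : R, 0 <= t ->
     specnorm (expm (A_R Ap Bp Cmo K L Rm) t) <= Mst * expR (- alpha * t))
  (P : 'M[R]_(nx + nx))
  (HP : A_R Ap Bp Cmo K L Rm *m P + P *m (A_R Ap Bp Cmo K L Rm)^T
          + B_cl Bw Bwh *m (B_cl Bw Bwh)^T = 0) :
  let AR := A_R Ap Bp Cmo K L Rm in
  let B := B_cl Bw Bwh in
  let Cp := C_p Cpo Dpo L in
  let CrR := C_rR Cmo Rm in
  let ER := (1%:M - Rm) *m Cmo in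
  let Cr : 'M[R]_(ny, nx + nx) := row_mx 0 Cmo in
  \tr (Cp *m P *m Cp^T) / \tr (CrR *m P *m CrR^T)
  <= 8 * (Mst ^+ 2 * specnorm AR * specnorm B ^+ 2)
         / (sigma_min B ^+ 2 * alpha)
       * (frobnorm Cp ^+ 2 / (frobnorm ER ^+ 2 + frobnorm Cr ^+ 2)).
Proof.
cbv zeta.
set AR := A_R Ap Bp Cmo K L Rm. set B := B_cl Bw Bwh. set Cp := C_p Cpo Dpo L.
set CrR := C_rR Cmo Rm. set ER := (1%:M - Rm) *m Cmo.
set Cr : 'M[R]_(ny, nx + nx) := row_mx 0 Cmo.
have Bu : B \in unitmx by rewrite -row_free_unit /row_free HB eqxx.
have Hdec : forall t z, 0 <= t ->
    vnorm (expm AR^T t *m z) <= Mst * expR (- alpha * t) * vnorm z.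
  move=> t z t0; rewrite expm_tr; apply: le_trans (specT _ _) _.
  apply: ler_wpM2r; [exact: vnorm_ge0 | exact: HM].
have F2E : frobnorm CrR ^+ 2 = frobnorm ER ^+ 2 + frobnorm Cr ^+ 2.
  rewrite /CrR /C_rR /Cr !frob_rowmx frob0 expr0n /= add0r.
  by rewrite (_ : (Rm - 1%:M) *m Cmo = - ER) ?frobN // /ER -mulNmx opprB.
set a := specnorm AR. set sB := specnorm B. set s := sigma_min B.
set F1 := frobnorm Cp ^+ 2. set F2 := frobnorm ER ^+ 2 + frobnorm Cr ^+ 2.
set tr1 := \tr (Cp *m P *m Cp^T). set tr2 := \tr (CrR *m P *m CrR^T).
set c1 := sB ^+ 2 * Mst ^+ 2 / (2 * alpha).
have c10 : 0 <= c1.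
  apply: divr_ge0; first by rewrite mulr_ge0 ?sqr_ge0.
  by rewrite mulr_ge0 // ltW.
have Hup1 : tr1 <= c1 * F1 := trace_ub Cp (P_upper HP Halpha Hdec).
have Hup2 : tr2 <= c1 * F2.
  by have := trace_ub CrR (P_upper HP Halpha Hdec); rewrite F2E.
have a0 : 0 <= a := specnorm_ge0 AR.
have F10 : 0 <= F1 by rewrite sqr_ge0.
have F20 : 0 <= F2 by rewrite addr_ge0 ?sqr_ge0.
have RHS0 : 0 <= 8 * (Mst ^+ 2 * a * sB ^+ 2) / (s ^+ 2 * alpha) * (F1 / F2).
  apply: mulr_ge0; last exact: divr_ge0.
  apply: divr_ge0; first by apply: mulr_ge0; [exact: ler0n|apply: mulr_ge0; [apply: mulr_ge0 => //; exact: sqr_ge0|exact: sqr_ge0]].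
  by rewrite mulr_ge0 ?sqr_ge0 // ltW.
have [n0 | npos] := posnP (nx + nx).
  by rewrite /tr2 tr_n0 // invr0 mulr0.
have s0 : 0 < s := sig_pos Bu npos.
have Hlow : forall a', a < a' -> s ^+ 2 / (2 * a') * F2 <= tr2.
  move=> a' Ha; rewrite /F2 -F2E; apply: trace_lb => z.
  apply: (P_lower HP Halpha Hdec z Ha (ltW s0)) => w; exact: sigT Bu (ltW s0).
have [F2eq0 | F2pos] := eqVneq F2 0.
  have : tr2 = 0.
    apply/eqP; rewrite eq_le; apply/andP; split; first by move: Hup2; rewrite F2eq0 mulr0.
    by have := Hlow (a + 1) (ltr_pwDr ltr01 (lexx a)); rewrite F2eq0 mulr0.
  by move=> ->; rewrite invr0 mulr0.
have F2p : 0 < F2 by rewrite lt_neqAle eq_sym F2pos F20.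
set Kc := sB ^+ 2 * Mst ^+ 2 * F1 / (alpha * s ^+ 2 * F2).
have Kc0 : 0 <= Kc.
  apply: divr_ge0; first by apply: mulr_ge0 => //; apply: mulr_ge0; exact: sqr_ge0.
  by rewrite !mulr_ge0 ?sqr_ge0 // ltW.
have Hall : forall a', a < a' -> tr1 / tr2 <= Kc * a'.
  move=> a' Ha.
  have a'0 : 0 < a' by apply: le_lt_trans Ha.
  have c2p : 0 < s ^+ 2 / (2 * a') * F2.
    by rewrite mulr_gt0 // divr_gt0 ?exprn_gt0 // mulr_gt0.
  have t2p : 0 < tr2 by apply: lt_le_trans (Hlow a' Ha).
  apply: le_trans (_ : c1 * F1 / tr2 <= _).
    by apply: ler_wpM2r => //; rewrite invr_ge0 ltW.
  apply: le_trans (_ : c1 * F1 / (s ^+ 2 / (2 * a') * F2) <= _).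
    apply: ler_wpM2l; first exact: mulr_ge0.
    rewrite lef_pV2 ?posrE //; exact: Hlow.
  rewrite le_eqVlt; apply/orP; left; apply/eqP.
  rewrite /c1 /Kc; field.
  by repeat (apply/andP; split); first [exact: F2pos | exact: (lt0r_neq0 s0) | exact: (lt0r_neq0 Halpha) | exact: (lt0r_neq0 a'0)].
have HKca : tr1 / tr2 <= Kc * a.
  apply/ler_addgt0Pr => e e0.
  have kp : 0 < Kc + 1 by apply: lt_le_trans ltr01 _; rewrite lerDr.
  have ha : a < a + e / (Kc + 1) by rewrite ltrDl divr_gt0.
  apply: le_trans (Hall _ ha) _.
  rewrite mulrDr lerD2l mulrA ler_pdivrMr //.
  nra.
apply: le_trans HKca _.
have -> : 8 * (Mst ^+ 2 * a * sB ^+ 2) / (s ^+ 2 * alpha) * (F1 / F2) = 8 * (Kc * a).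
  rewrite /Kc; field.
  by repeat (apply/andP; split); first [exact: F2pos | exact: (lt0r_neq0 s0) | exact: (lt0r_neq0 Halpha)].
have : 0 <= Kc * a by rewrite mulr_ge0.
lra.
Qed.
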